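(* Let $\mathcal F$ be a Banach function space that is compactly and densely embedded in $C(\mathbf X)$. There exists a strategy for Predictor (with $|\mu_n|\le1$) that guarantees, for all $N=1,2,\dots$, all $F\in C(\mathbf X)$ and all moves of Reality, $$\sum_{n=1}^N(y_n-\mu_n)^2\le\sum_{n=1}^N(y_n-F(x_n))^2+C\inf_{\epsilon\in(0,1/2]}\left(\mathcal H_{\epsilon/A(\epsilon)}(U_{\mathcal F})+\log\log\frac1\epsilon+\log\log A(\epsilon)+\epsilon N+1\right),$$ where $C$ is a universal constant and $A(\epsilon):=2\max\bigl(1,\mathcal A^{\mathcal F}_\epsilon(F)\bigr)$.
   Context: Protocol: $\mathbf X$ is a nonempty topological space. At each round $n$ Reality announces $x_n\in\mathbf X$, Predictor announces $\mu_n\in\mathbb R$, Reality announces $y_n\in[-1,1]$; a strategy for Predictor maps each history $(x_1,y_1,\dots,x_{n-1},y_{n-1},x_n)$ to $\mu_n$, and guarantees must hold for all (possibly adaptive) moves of Reality. $C(\mathbf X)$: bounded continuous real functions on $\mathbf X$ with the supremum norm. A Banach function space compactly embedded in $C(\mathbf X)$: a linear subspace $\mathcal F\subseteq C(\mathbf X)$ with a norm $\|\cdot\|_{\mathcal F}$ making it a Banach space, whose unit ball $U_{\mathcal F}=\{F:\|F\|_{\mathcal F}\le1\}$ is compact in $C(\mathbf X)$; densely embedded means $\mathcal F$ is dense in $C(\mathbf X)$ for the supremum norm. Approachability: for $F\in C(\mathbf X)$ and $\epsilon>0$, $\mathcal A^{\mathcal F}_\epsilon(F):=\inf\{\|F^*\|_{\mathcal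 F}: F^*\in\mathcal F,\ \|F-F^*\|_{C(\mathbf X)}\le\epsilon\}$. $\mathcal H_\epsilon(A)$ is $\log_2$ of the minimal number of points of $A$ forming an $\epsilon$-net for $A$ in the supremum metric. $\log=\log_2$. *)

(* Defs.v *)
From HB Require Import structures.
From mathcomp Require Import all_boot all_order all_algebra.
From mathcomp Require Import all_classical all_reals all_analysis.
Set Implicit Arguments. Unset Strict Implicit. Unset Printing Implicit Defensive.
Import Order.TTheory GRing.Theory Num.Theory.
Import numFieldNormedType.Exports.
Local Open Scope classical_set_scope.
Local Open Scope ring_scope.

Section Defs.
Variables (R : realType) (X : topologicalType).

Definition log2 (x : R) : R := ln x / ln 2.

Definition CX : set (X -> R) :=
  [set f | continuous f /\ exists M : R, forall x, `|f x| <= M].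

Definition supdist_le (f g : X -> R) (e : R) : Prop :=
  forall x, `|f x - g x| <= e.

Record BanachFunctionSpace (Fs : set (X -> R)) (nF : (X -> R) -> R) : Prop := {
  bfs_sub : Fs `<=` CX;
  bfs_zero : Fs (fun _ => 0);
  bfs_add : forall f g, Fs f -> Fs g -> Fs (fun x => f x + g x);
  bfs_scale : forall (a : R) f, Fs f -> Fs (fun x => a * f x);
  bfs_norm_ge0 : forall f, Fs f -> 0 <= nF f;
  bfs_norm_eq0 : forall f, Fs f -> nF f = 0 -> f = (fun _ => 0);
  bfs_normZ : forall (a : R) f, Fs f -> nF (fun x => a * f x) = `|a| * nF f;
  bfs_normD : forall f g, Fs f -> Fs g ->
      nF (fun x => f x + g x) <= nF f + nF g;
  bfs_complete : forall u : nat -> (X -> R), (forall n, Fs (u n)) ->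
      (forall e : R, 0 < e -> exists N, forall m n, (N <= m)%N -> (N <= n)%N ->
          nF (fun x => u m x - u n x) <= e) ->
      exists2 f, Fs f & forall e : R, 0 < e -> exists N, forall n, (N <= n)%N ->
          nF (fun x => u n x - f x) <= e
}.

Definition unit_ball (Fs : set (X -> R)) (nF : (X -> R) -> R) : set (X -> R) :=
  [set f | Fs f /\ nF f <= 1].

(* compact embedding: unit ball compact in C(X) (uniform topology = sup norm
   topology on bounded functions) *)
Definition compactly_embedded (Fs : set (X -> R)) (nF : (X -> R) -> R) : Prop :=
  compact (unit_ball Fs nF : set {uniform X -> R}).

Definition densely_embedded (Fs : set (X -> R)) : Prop :=
  forall f, CX f -> forall e : R, 0 < e -> exists2 g, Fs g & supdist_le f g e.

Definition approachability (Fs : set (X -> R)) (nF : (X -> R) -> R)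
    (e : R) (F : X -> R) : R :=
  inf [set nF g | g in [set g | Fs g /\ supdist_le F g e]].

Definition has_net (A : set (X -> R)) (e : R) (n : nat) : Prop :=
  exists s : seq (X -> R), size s = n /\ (forall f, f \in s -> A f) /\
    forall g, A g -> exists2 f, f \in s & supdist_le g f e.

Definition entropy (A : set (X -> R)) (e : R) : R :=
  log2 (inf [set (n%:R : R) | n in [set n | has_net A e n]]).

End Defs.

Definition strategy (R : realType) (X : Type) := seq (X * R) -> X -> R.

Definition history (R : realType) (X : Type) (x : nat -> X) (y : nat -> R)
  (n : nat) : seq (X * R) := [seq (x i, y i) | i <- iota 0 n].

(* Main.v *)
Require Import Defs.
From HB Require Import structures.
From mathcomp Require Import all_boot all_order all_algebra.
From mathcomp Require Import all_classical all_reals all_analysis.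
From mathcomp Require Import Rstruct Rstruct_topology.
From Stdlib Require Rdefinitions.
Import Order.TTheory GRing.Theory Num.Theory.
Import numFieldNormedType.Exports.
Local Open Scope classical_set_scope.
Local Open Scope ring_scope.
From mathcomp Require Import ring lra.
From mathcomp Require Import exp.
Section Expc.
Variable R : realType.
Implicit Types a b s x : R.

Lemma expR_sq_lb x : -2 <= x -> (1 + x/2)^+2 <= expR x.
Proof.
move=> hx.
have h1 : 0 <= 1 + x/2 by lra.
have h2 : 1 + x/2 <= expR (x/2) by apply: expR_ge1Dx.
have -> : x = x/2 + x/2 by field.
rewrite expRD expr2.
have : (x / 2 + x / 2) / 2 = x/2 by field.
move=> ->.
by apply: ler_pM.
Qed.

Lemma key_exp s : -(1/8) <= s <= 1/8 -> expR (-(s + s^+2)) <= 1 - s.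
Proof.
move=> /andP[hs1 hs2].
set x := s + s^+2.
have hx : -2 <= x by rewrite /x; nra.
have hpoly : 1 <= (1 - s) * (1 + x/2)^+2.
  rewrite /x; nra.
have hE := expR_sq_lb x hx.
have h1s : 0 <= 1 - s by lra.
have : 1 <= (1 - s) * expR x.
  apply: (le_trans hpoly); exact: ler_wpM2l.
move=> h.
have hinv : expR (- x) * expR x = 1.
  by rewrite mulrC expRxMexpNx_1.
have hpos : 0 <= expR (-x) := expR_ge0 _.
have : expR (-x) * 1 <= expR (-x) * ((1 - s) * expR x) by apply: ler_wpM2l.
rewrite mulr1 mulrCA hinv mulr1 //.
Qed.

Definition eta : R := (128%:R)^-1.

Lemma tangent a b : `|a| <= 2 -> `|b| <= 2 ->
  expR (- eta * a^+2) <= expR (- eta * b^+2) * (1 - 2 * eta * b * (a - b)).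
Proof.
move=> ha hb.
have [ha1 ha2] : -2 <= a /\ a <= 2 by move: ha; rewrite ler_norml => /andP[]; lra.
have [hb1 hb2] : -2 <= b /\ b <= 2 by move: hb; rewrite ler_norml => /andP[]; lra.
set u := a - b. set s := 2 * eta * b * u.
have he : eta = 1/128 by rewrite /eta; field.
have E : - eta * a^+2 = - eta * b^+2 + (- (s + eta * u^+2)).
  rewrite /s /u; ring.
rewrite E expRD.
apply: ler_wpM2l; first exact: expR_ge0.
have hbu : `|b * u| <= 8.
  have hu : `|u| <= 4 by rewrite /u ler_norml; apply/andP; split; lra.
  rewrite normrM; apply: le_trans (ler_pM (normr_ge0 _) (normr_ge0 _) hb hu) _; lra.
have hs : -(1/8) <= s <= 1/8.
  move: hbu; rewrite ler_norml => /andP[h1 h2].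
  rewrite /s he; apply/andP; split; nra.
apply: le_trans (key_exp s hs).
rewrite ler_expR.
have : s^+2 <= eta * u^+2.
  have hbb : b^+2 <= 4 by nra.
  rewrite /s he; nra.
lra.
Qed.

End Expc.
Section Expc2.
Variable R : realType.

Lemma expconc (I : Type) (K : seq I) (v q : I -> R) (mu y : R) :
  (forall k, 0 <= v k) -> (forall k, `|q k| <= 1) -> `|mu| <= 1 -> `|y| <= 1 ->
  \sum_(k <- K) v k * q k = mu * \sum_(k <- K) v k ->
  \sum_(k <- K) v k * expR (- eta R * (y - q k)^+2)
    <= (\sum_(k <- K) v k) * expR (- eta R * (y - mu)^+2).
Proof.
move=> v0 q1 mu1 y1 H.
set b := y - mu. set E := expR (- eta R * b^+2). set c := 2 * eta R * b.
have hb : `|b| <= 2 by rewrite /b; apply: (le_trans (ler_normB _ _)); lra.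
apply: (@le_trans _ _ (\sum_(k <- K) v k * (E * (1 - c * ((y - q k) - b))))).
  apply: ler_sum => k _; apply: ler_wpM2l => //.
  apply: tangent => //.
  by apply: (le_trans (ler_normB _ _)); have := q1 k; lra.
have -> : \sum_(k <- K) v k * (E * (1 - c * ((y - q k) - b)))
   = \sum_(k <- K) ((E * v k - (E * c * mu) * v k) + (E * c) * (v k * q k)).
  by apply: eq_bigr => k _; rewrite /b; ring.
rewrite big_split /= sumrB -!mulr_sumr H.
by match goal with |- is_true (?a <= ?b) => have -> : a = b by ring end.
Qed.

End Expc2.
Section Agg.
Variables (R : realType) (X : Type) (I : eqType).
Variables (cand : nat -> seq I) (awake : I -> nat -> bool) (pri : I -> R) (p : I -> X -> R).
Variables (x : nat -> X) (y : nat -> R).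

Definition lossk (f : nat -> R) k s :=
  if awake k s then (y s - p k (x s))^+2 else (y s - f s)^+2.
Definition Lk (f : nat -> R) k t := \sum_(s < t) lossk f k s.
Definition wk f k t := pri k * expR (- eta R * Lk f k t).
Definition aden f t := \sum_(k <- cand t | awake k t) wk f k t.
Definition anum f t := \sum_(k <- cand t | awake k t) wk f k t * p k (x t).
Definition agg (f : nat -> R) t :=
  if aden f t == 0 then 0 else anum f t / aden f t.

Fixpoint mus (t : nat) : nat -> R :=
  match t with
  | 0 => fun _ => 0
  | t'.+1 => fun s => if (s < t')%N then mus t' s else agg (mus t') t'
  end.
Definition mu s := mus s.+1 s.

Lemma mus_mu t s : (s < t)%N -> mus t s = mu s.
Proof.
elim: t s => [//|t IH] s hs /=.
case: ltnP => h; first exact: IH.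
have -> : s = t by apply/eqP; rewrite eqn_leq h -ltnS hs.
by rewrite /mu /= ltnn.
Qed.

Lemma lossk_ext f g k s : f s = g s -> lossk f k s = lossk g k s.
Proof. by rewrite /lossk => ->. Qed.

Lemma Lk_ext f g k t : (forall s, (s < t)%N -> f s = g s) -> Lk f k t = Lk g k t.
Proof. by move=> h; apply: eq_bigr => s _; apply: lossk_ext; apply: h. Qed.

Lemma agg_ext f g t : (forall s, (s < t)%N -> f s = g s) -> agg f t = agg g t.
Proof.
move=> h.
have E : forall k, wk f k t = wk g k t by move=> k; rewrite /wk (Lk_ext f g k t h).
have ed : aden f t = aden g t by apply: eq_bigr => k _; rewrite E.
have en : anum f t = anum g t by apply: eq_bigr => k _; rewrite E.
by rewrite /agg ed en.
Qed.

Lemma mu_agg t : mu t = agg mu t.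
Proof. by rewrite /mu /= ltnn; apply: agg_ext => s hs; apply: mus_mu. Qed.

Hypothesis pri_ge0 : forall k, 0 <= pri k.
Hypothesis p1 : forall k z, `|p k z| <= 1.
Hypothesis y1 : forall s, `|y s| <= 1.

Lemma wk_ge0 f k t : 0 <= wk f k t.
Proof. by rewrite /wk mulr_ge0 // expR_ge0. Qed.

Lemma anum_le f t : `|anum f t| <= aden f t.
Proof.
rewrite /anum /aden; apply: (le_trans (ler_norm_sum _ _ _)).
apply: ler_sum => k _; rewrite normrM ger0_norm ?wk_ge0 //.
by rewrite -{2}(mulr1 (wk f k t)); apply: ler_wpM2l; [exact: wk_ge0|exact: p1].
Qed.

Lemma agg_le1 f t : `|agg f t| <= 1.
Proof.
rewrite /agg; case: eqP => [_|hd]; first by rewrite normr0.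
have hd0 : 0 <= aden f t by apply: sumr_ge0 => k _; exact: wk_ge0.
have hdp : 0 < aden f t by rewrite lt_def; apply/andP; split => //; apply/eqP.
by rewrite normrM normfV (ger0_norm hd0) ler_pdivrMr // mul1r anum_le.
Qed.

Lemma agg_eq f t : anum f t = agg f t * aden f t.
Proof.
rewrite /agg; case: eqP => [hd|hd]; last by rewrite divfK //; apply/eqP.
by have := anum_le f t; rewrite hd mul0r normr_le0 => /eqP.
Qed.

Lemma mu_le1 t : `|mu t| <= 1.
Proof. by rewrite mu_agg agg_le1. Qed.

Definition Mloss t := \sum_(s < t) (y s - mu s)^+2.

Hypothesis cand_uniq : forall s, uniq (cand s).
Hypothesis cand_awake : forall s k, awake k s -> k \in cand s.

Lemma sum_awake (K : seq I) t (F : I -> R) : uniq K -> {subset cand t <= K} ->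
  \sum_(k <- K | awake k t) F k = \sum_(k <- cand t | awake k t) F k.
Proof.
move=> uK sK; rewrite -big_filter -[RHS]big_filter; apply: perm_big.
apply: uniq_perm; rewrite ?filter_uniq //.
move=> k; rewrite !mem_filter; case a: (awake k t) => //=.
by rewrite (sK _ (cand_awake t k a)) (cand_awake t k a).
Qed.

Lemma invariant (K : seq I) t : uniq K ->
  (forall s, (s < t)%N -> {subset cand s <= K}) ->
  \sum_(k <- K) pri k * expR (- eta R * Lk mu k t)
    <= (\sum_(k <- K) pri k) * expR (- eta R * Mloss t).
Proof.
move=> uK; elim: t => [_|t IH hK].
  rewrite /Mloss big_ord0 mulr0 expR0 mulr1.
  by apply: ler_sum => k _; rewrite /Lk big_ord0 mulr0 expR0 mulr1.
pose q k := if awake k t then p k (x t) else mu t.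
have eL : forall k, pri k * expR (- eta R * Lk mu k t.+1) =
    wk mu k t * expR (- eta R * (y t - q k)^+2).
  move=> k; rewrite /wk /Lk big_ord_recr /= mulrDr expRD mulrA /q /lossk.
  by case: (awake k t).
under eq_bigr do rewrite eL.
have hsum : \sum_(k <- K) wk mu k t * q k = mu t * \sum_(k <- K) wk mu k t.
  rewrite (bigID (fun k => awake k t)) /= [X in _ = _ * X](bigID (fun k => awake k t)) /=.
  have e1 : \sum_(k <- K | awake k t) wk mu k t * q k = anum mu t.
    rewrite /anum -(sum_awake K t _ uK (hK t (ltnSn t))).
    by apply: eq_bigr => k h; rewrite /q h.
  have e2 : \sum_(k <- K | awake k t) wk mu k t = aden mu t.
    by rewrite /aden -(sum_awake K t _ uK (hK t (ltnSn t))).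
  have e3 : \sum_(k <- K | ~~ awake k t) wk mu k t * q k =
            mu t * \sum_(k <- K | ~~ awake k t) wk mu k t.
    rewrite mulr_sumr; apply: eq_bigr => k /negbTE h; by rewrite /q h mulrC.
  by rewrite e1 e2 e3 mulrDr agg_eq -mu_agg.
have hq : forall k, `|q k| <= 1.
  by move=> k; rewrite /q; case: (awake k t) => //; exact: mu_le1.
apply: (le_trans (@expconc R I K (fun k => wk mu k t) q (mu t) (y t)
   (fun k => wk_ge0 mu k t) hq (mu_le1 t) (y1 t) hsum)).
have IH' := IH (fun s hs => hK s (ltnW hs)).
have -> : \sum_(k <- K) pri k * expR (- eta R * Lk mu k t) = \sum_(k <- K) wk mu k t by [].
rewrite /Mloss big_ord_recr /= mulrDr expRD mulrA.
apply: ler_wpM2r; first exact: expR_ge0.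
exact: IH'.
Qed.


Hypothesis cand_mono : forall s t, (s <= t)%N -> {subset cand s <= cand t}.
Hypothesis awake_mono : forall k s t, (s <= t)%N -> awake k s -> awake k t.
Hypothesis pri_sum : forall t, \sum_(k <- cand t) pri k <= 1.

Lemma sq_le4 (a b : R) : `|a| <= 1 -> `|b| <= 1 -> (a - b)^+2 <= 4.
Proof.
move=> ha hb; have : `|a - b| <= 2 by apply: (le_trans (ler_normB _ _)); lra.
rewrite ler_norml => /andP[h1 h2]; nra.
Qed.

Lemma Lk_bound k tau N : awake k tau ->
  Lk mu k N <= \sum_(s < N) (y s - p k (x s))^+2 + 4 * (minn N tau)%:R.
Proof.
move=> hk; elim: N => [|N IH]; first by rewrite /Lk !big_ord0 min0n mulr0 addr0.
rewrite /Lk !big_ord_recr /= /lossk.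
case a: (awake k N).
  apply: (@le_trans _ _ (\sum_(s < N) (y s - p k (x s))^+2 + 4 * (minn N tau)%:R
            + (y N - p k (x N))^+2)).
    by rewrite lerD2r.
  rewrite addrAC lerD2l; apply: ler_wpM2l => //; rewrite ler_nat.
  by rewrite leq_min geq_minr andbT (leq_trans (geq_minl N tau) (leqnSn N)).
have hN : (N < tau)%N.
  by rewrite ltnNge; apply/negP => h; move: a; rewrite (awake_mono k tau N h hk).
have -> : minn N.+1 tau = (minn N tau).+1.
  by rewrite (elimT minn_idPl hN) (elimT minn_idPl (ltnW hN)).
change (Lk mu k N + (y N - mu N)^+2 <= \sum_(i < N) (y i - p k (x i)) ^+ 2 + (y N - p k (x N)) ^+ 2 +
  4 * (minn N tau).+1%:R).
rewrite -[(minn N tau).+1%:R]natr1 mulrDr mulr1.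
have h4 : (y N - mu N)^+2 <= 4 by apply: sq_le4; [exact: y1|exact: mu_le1].
have h0 : 0 <= (y N - p k (x N))^+2 by apply: sqr_ge0.
move: IH; set A := Lk _ _ _; set B := \sum_(s < N) _; lra.
Qed.

Lemma expert_bound k tau N : awake k tau -> 0 < pri k ->
  Mloss N <= \sum_(s < N) (y s - p k (x s))^+2 + 4 * tau%:R + 128 * (- ln (pri k)).
Proof.
move=> hk hp.
set K := cand (maxn N tau).
have uK : uniq K by apply: cand_uniq.
have sK : forall s, (s < N)%N -> {subset cand s <= K}.
  by move=> s hs; apply: cand_mono; apply: leq_trans (ltnW hs) (leq_maxl _ _).
have kK : k \in K by apply: (cand_mono tau (maxn N tau) (leq_maxr N tau)); apply: cand_awake.
have hinv := invariant K N uK sK.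
have E0 : 0 <= expR (- eta R * Mloss N) := expR_ge0 _.
have h1 : pri k * expR (- eta R * Lk mu k N) <= expR (- eta R * Mloss N).
  apply: le_trans (le_trans hinv _).
    rewrite (bigD1_seq k kK uK) /= lerDl; apply: sumr_ge0 => i _.
    by rewrite mulr_ge0 // expR_ge0.
  by rewrite -{2}(mul1r (expR _)); apply: ler_wpM2r => //; apply: pri_sum.
have hpos1 : 0 < pri k * expR (- eta R * Lk mu k N) by rewrite mulr_gt0 // expR_gt0.
have : ln (pri k * expR (- eta R * Lk mu k N)) <= ln (expR (- eta R * Mloss N)).
  by rewrite ler_ln // posrE expR_gt0.
rewrite lnM ?posrE ?expR_gt0 // !expRK.
have he : eta R = 1/128 by rewrite /eta; field.
rewrite he => hl.
have hL := Lk_bound k tau N hk.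
have hm : ((minn N tau)%:R : R) <= tau%:R by rewrite ler_nat geq_minr.
move: hl hL hm; set M := Mloss N; set L := Lk _ _ _; set B := \sum_(s < N) _.
set lp := ln (pri k); set m := ((minn N tau)%:R : R); set tt := (tau%:R : R).
lra.
Qed.

End Agg.
Section Ext.
Variables (R : realType) (X : Type) (I : eqType).
Variables (cand : nat -> seq I) (awake : I -> nat -> bool) (pri : I -> R) (p : I -> X -> R).

Lemma agg_ext2 (x x' : nat -> X) (y y' : nat -> R) f g t :
  (forall s, (s < t)%N -> [/\ x s = x' s, y s = y' s & f s = g s]) -> x t = x' t ->
  agg R X I cand awake pri p x y f t = agg R X I cand awake pri p x' y' g t.
Proof.
move=> h ht.
have EL : forall k, Lk R X I awake p x y f k t = Lk R X I awake p x' y' g k t.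
  move=> k; apply: eq_bigr => s _; rewrite /lossk.
  by have [-> -> ->] := h s (ltn_ord s).
have E : forall k, wk R X I awake pri p x y f k t = wk R X I awake pri p x' y' g k t.
  by move=> k; rewrite /wk EL.
have ed : aden R X I cand awake pri p x y f t = aden R X I cand awake pri p x' y' g t.
  by apply: eq_bigr => k _; rewrite E.
have en : anum R X I cand awake pri p x y f t = anum R X I cand awake pri p x' y' g t.
  by apply: eq_bigr => k _; rewrite E ht.
by rewrite /agg ed en.
Qed.

Lemma mu_ext2 (x x' : nat -> X) (y y' : nat -> R) n :
  (forall s, (s <= n)%N -> x s = x' s) -> (forall s, (s < n)%N -> y s = y' s) ->
  mu R X I cand awake pri p x y n = mu R X I cand awake pri p x' y' n.
Proof.
move=> hx hy.
suff H : forall t, (t <= n)%N -> forall s, (s <= t)%N ->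
   mu R X I cand awake pri p x y s = mu R X I cand awake pri p x' y' s by exact: (H n (leqnn n) n (leqnn n)).
elim=> [_ s|t IH ht s hs].
  rewrite leqn0 => /eqP ->; rewrite !mu_agg; apply: agg_ext2 => //.
  exact: hx.
rewrite leq_eqVlt in hs; case/orP: hs => [/eqP ->|hs]; last first.
  by apply: IH => //; apply: ltnW.
rewrite !mu_agg; apply: agg_ext2; last exact: hx.
move=> s' hs'; split.
- by apply: hx; apply: leq_trans (ltnW hs') ht.
- by apply: hy; apply: leq_trans hs' ht.
- by apply: IH => //; apply: ltnW.
Qed.

End Ext.

Definition mkstrat (R : realType) (X : Type) (I : eqType)
  (cand : nat -> seq I) (awake : I -> nat -> bool) (pri : I -> R) (p : I -> X -> R)
  : seq (X * R) -> X -> R :=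
  fun h z =>
    mu R X I cand awake pri p (fun i => if (i < size h)%N then (nth (z, 0) h i).1 else z)
       (fun i => (nth (z, 0) h i).2) (size h).

Lemma mkstrat_hist (R : realType) (X : Type) (I : eqType)
  (cand : nat -> seq I) (awake : I -> nat -> bool) (pri : I -> R) (p : I -> X -> R)
  (x : nat -> X) (y : nat -> R) n :
  mkstrat R X I cand awake pri p [seq (x i, y i) | i <- iota 0 n] (x n) =
  mu R X I cand awake pri p x y n.
Proof.
rewrite /mkstrat size_map size_iota; symmetry; apply: mu_ext2.
  move=> s hs; case: ltnP => h //.
    by rewrite (nth_map 0) ?size_iota // nth_iota.
  by have -> : s = n by apply/eqP; rewrite eqn_leq hs h.
move=> s hs.
by rewrite (nth_map 0) ?size_iota // nth_iota.
Qed.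
Section Logs.
Variable R : realType.
Implicit Types x y r : R.

Definition lg x : R := ln x / ln 2.

Lemma ln2_gt0 : 0 < ln (2:R).
Proof. by apply: ln_gt0; lra. Qed.

Lemma ln2_le1 : ln (2:R) <= 1.
Proof.
have h : (-1 : R) < 1 by lra.
have := @le_ln1Dx R 1 h.
by have -> : (1 + 1 : R) = 2 by lra.
Qed.

Lemma lg_mono x y : 0 < x -> x <= y -> lg x <= lg y.
Proof.
move=> hx hxy; rewrite /lg ler_pM2r ?invr_gt0 ?ln2_gt0 //.
by rewrite ler_ln // posrE; apply: lt_le_trans hxy.
Qed.

Lemma lgM x y : 0 < x -> 0 < y -> lg (x * y) = lg x + lg y.
Proof. by move=> hx hy; rewrite /lg lnM ?posrE // mulrDl. Qed.

Lemma lg2 : lg 2 = 1.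
Proof. by rewrite /lg divff //; apply: lt0r_neq0; exact: ln2_gt0. Qed.

Lemma lg1 : lg 1 = 0.
Proof. by rewrite /lg ln1 mul0r. Qed.

Lemma lgX n : lg (2 ^+ n) = n%:R.
Proof.
have h := ln2_gt0.
rewrite /lg lnXn; last by lra.
rewrite -mulr_natr; field; rewrite mul1r; exact: lt0r_neq0.
Qed.

Lemma lg4 : lg 4 = 2.
Proof. by have := lgX 2; rewrite expr2 (_ : (2:R) * 2 = 4) //; lra. Qed.

Lemma lg_ge0 x : 1 <= x -> 0 <= lg x.
Proof. by move=> h; rewrite /lg divr_ge0 ?ln_ge0 //; lra. Qed.

Lemma ln_le_lg x : 1 <= x -> ln x <= lg x.
Proof.
move=> h; rewrite /lg ler_pdivlMr ?ln2_gt0 //.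
rewrite -{2}(mulr1 (ln x)); apply: ler_wpM2l; [exact: ln_ge0 | exact: ln2_le1].
Qed.

Lemma exists_pow2 r : 1 <= r -> exists m : nat, 2 ^+ m <= r < 2 ^+ m.+1.
Proof.
move=> hr.
have ex : exists n, `[< r < 2 ^+ n >].
  exists (Num.Def.archi_bound r); apply/asboolP.
  apply: lt_le_trans (archi_boundP (le_trans ler01 hr)) _.
  elim: (Num.Def.archi_bound r) => [|n IH]; first by rewrite expr0.
  have h1 : (1:R) <= 2 ^+ n by apply: exprn_ege1; lra.
  rewrite exprS -[n.+1%:R]natr1; lra.
case: (ex_minnP ex) => m /asboolP hm hmin.
case: m hm hmin => [|m] hm hmin; first by move: hm; rewrite expr0; lra.
exists m; rewrite hm andbT.
have : ~ (r < 2 ^+ m).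
  move=> h; have := hmin m (introT (asboolP _) h); rewrite ltnn //.
by rewrite real_ltNge ?num_real // => /negP; rewrite negbK.
Qed.

End Logs.
Section Clip.
Variable R : realType.
Implicit Types u v y a b : R.

Definition clip u : R := if u < -1 then -1 else if 1 < u then 1 else u.

Lemma clip_le1 u : `|clip u| <= 1.
Proof.
rewrite /clip ler_norml; case: ltP => h1; first lra.
case: ltP => h2; lra.
Qed.

Lemma clip_lip u v : `|clip u - clip v| <= `|u - v|.
Proof.
have h1 := ler_norm (u - v); have h2 := ler_norm (v - u).
rewrite distrC in h2.
rewrite /clip ler_norml.
case: (ltP u (-1)) => a1; case: (ltP 1 u) => a2; case: (ltP v (-1)) => b1;
  case: (ltP 1 v) => b2; apply/andP; split; lra.
Qed.

Lemma clip_proj y v : `|y| <= 1 -> (y - clip v)^+2 <= (y - v)^+2.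
Proof.
rewrite ler_norml => /andP[y1 y2].
rewrite /clip; case: ltP => a1; first nra.
case: ltP => a2; first nra.
lra.
Qed.

Lemma sq_diff y a b : `|y| <= 1 -> `|a| <= 1 -> `|b| <= 1 ->
  (y - a)^+2 <= (y - b)^+2 + 4 * `|a - b|.
Proof.
move=> hy ha hb.
have E : (y - a)^+2 - (y - b)^+2 = (b - a) * (2 * y - a - b) by ring.
have h3 : `|2 * y - a - b| <= 4.
  have : `|2 * y - a - b| <= `|2 * y| + `|a| + `|b|.
    apply: (le_trans (ler_normB _ _)); rewrite lerD2r.
    exact: (le_trans (ler_normB _ _)).
  rewrite normrM (ger0_norm (_ : (0:R) <= 2)) //; lra.
have : (y - a)^+2 - (y - b)^+2 <= `|a - b| * 4.
  rewrite E; apply: (le_trans (ler_norm _)); rewrite normrM distrC.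
  by apply: ler_wpM2l.
lra.
Qed.

Lemma clip_loss y u v : `|y| <= 1 ->
  (y - clip u)^+2 <= (y - v)^+2 + 4 * `|u - v|.
Proof.
move=> hy.
have h1 := sq_diff y (clip u) (clip v) hy (clip_le1 u) (clip_le1 v).
have h2 := clip_proj y v hy.
have h3 := clip_lip u v.
lra.
Qed.

End Clip.
HB.instance Definition _ (R : realType) (X : topologicalType) :=
  isPointed.Build {uniform X -> R} (fun _ => 0).

Section Nets.
Variables (R : realType) (X : topologicalType).

Lemma compact_net (A : set (X -> R)) (d : R) :
  compact (A : set {uniform X -> R}) -> 0 < d -> exists n, has_net A d n.
Proof.
move=> cA d0.
rewrite (@compact_cover {uniform X -> R}) in cA.
pose f (g : {uniform X -> R}) : set {uniform X -> R} :=
  interior [set h : {uniform X -> R} | forall z, `|g z - h z| < d].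
have fo : forall i, A i -> open (f i) by move=> i _; exact: open_interior.
have cov : (A : set {uniform X -> R}) `<=` cover A f.
  move=> g Ag; exists g => //.
  rewrite /f /interior /=.
  apply/uniform_nbhs; exists [set xy : R * R | ball xy.1 d xy.2]; split.
    by rewrite -entourage_ballE; exists d => //.
  by move=> h /= Hh z; have := Hh z I; rewrite /ball /=.
have [D' sub cov'] := cA _ A f fo cov.
exists (size (finmap.enum_fset D')), (finmap.enum_fset D'); split => //; split.
  by move=> g gD; have := sub g gD; rewrite inE.
move=> g Ag; have [i Di fig] := cov' g Ag.
exists i => //.
have : [set h : {uniform X -> R} | forall z, `|i z - h z| < d] g.
  exact: nbhs_singleton fig.
by move=> H z; rewrite distrC; apply: ltW; exact: H.
Qed.

End Nets.
Section Concrete.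
Variables (R : realType) (X : topologicalType).
Variables (Fs : set (X -> R)) (nF : (X -> R) -> R).

Definition U := unit_ball Fs nF.
Definition dy (m : nat) : R := (2 ^+ m)^-1.

Definition nsz (m : nat) : nat :=
  if pselect (exists n, `[< has_net U (dy m) n >]) is left h then ex_minn h else 0.

Definition net (m : nat) : seq (X -> R) :=
  if pselect (has_net U (dy m) (nsz m)) is left h then sval (cid h) else [::].

Definition lg2n (x : nat) : nat := trunc_log 2 x.+1.
Definition tau (m j : nat) : nat := lg2n j + lg2n m + lg2n (nsz m).
Definition Ity := (nat * nat * nat)%type.
Definition awk (k : Ity) (t : nat) : bool := (tau k.1.2 k.1.1 <= t)%N && (k.2 < nsz k.1.2)%N.
Definition Bd (t : nat) : nat := 2 ^ t.+1.
Definition cand (t : nat) : seq Ity :=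
  [seq (jm, i) | jm <- [seq (j, m) | j <- iota 0 (Bd t), m <- iota 0 (Bd t)],
                 i <- iota 0 (Bd t)].
Definition aw (n : nat) : R := ((n.+1 * n.+2)%:R)^-1.
Definition pri (k : Ity) : R :=
  aw k.1.1 * aw k.1.2 * (if (k.2 < nsz k.1.2)%N then ((nsz k.1.2)%:R)^-1 else 0).
Definition pexp (k : Ity) (z : X) : R :=
  clip R (2 ^+ k.1.1 * nth (fun _ => 0) (net k.1.2) k.2 z).

Lemma pexp1 k z : `|pexp k z| <= 1.
Proof. exact: clip_le1. Qed.

Lemma aw_gt0 n : 0 < aw n.
Proof. by rewrite /aw invr_gt0 ltr0n muln_gt0. Qed.

Lemma pri_ge0 k : 0 <= pri k.
Proof.
rewrite /pri; apply: mulr_ge0; first by apply: mulr_ge0; apply: ltW; apply: aw_gt0.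
by case: ifP => // _; rewrite invr_ge0 ler0n.
Qed.

Lemma lg2n_lt x t : (lg2n x <= t)%N -> (x < 2 ^ t.+1)%N.
Proof.
move=> h; have := trunc_log_bounds (ltnSn 1) (ltn0Sn x).
rewrite -/(lg2n x) => /andP[_ h2].
apply: leq_trans (ltnW h2) _.
by rewrite leq_exp2l.
Qed.

Lemma mem_cand k t : (k \in cand t) = [&& (k.1.1 < Bd t)%N, (k.1.2 < Bd t)%N & (k.2 < Bd t)%N].
Proof.
case: k => [[j m] i] /=.
apply/allpairsP/idP => [[[jm i'] [/= hjm hi E]]|].
  case/allpairsP: hjm => [[j' m'] [/= hj hm E']]; subst jm.
  case: E => -> -> ->.
  by move: hj hm hi; rewrite !mem_iota /= !add0n => -> -> ->.
case/and3P => hj hm hi; exists ((j, m), i); split => //=; last by rewrite mem_iota.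
by apply/allpairsP; exists (j, m); split => //=; rewrite mem_iota.
Qed.

Lemma cand_uniq t : uniq (cand t).
Proof.
apply: allpairs_uniq; [|exact: iota_uniq|].
  apply: allpairs_uniq; [exact: iota_uniq|exact: iota_uniq|].
  by move=> [a b] [c d] _ _ /= [-> ->].
by move=> [a b] [c d] _ _ /= [-> ->].
Qed.

Lemma cand_awake t k : awk k t -> k \in cand t.
Proof.
case/andP => ht hi; rewrite mem_cand.
have h1 : (lg2n k.1.1 <= t)%N.
  by apply: leq_trans ht; rewrite /tau -addnA leq_addr.
have h2 : (lg2n k.1.2 <= t)%N.
  by apply: leq_trans ht; exact: leq_trans (leq_addl _ _) (leq_addr _ _).
have h3 : (lg2n (nsz k.1.2) <= t)%N.
  by apply: leq_trans ht; rewrite /tau leq_addl.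
rewrite (lg2n_lt _ _ h1) (lg2n_lt _ _ h2) /=.
exact: ltn_trans hi (lg2n_lt _ _ h3).
Qed.

Lemma cand_mono s t : (s <= t)%N -> {subset cand s <= cand t}.
Proof.
move=> h k; rewrite !mem_cand.
have hB : (Bd s <= Bd t)%N by rewrite /Bd leq_exp2l.
case/and3P => h1 h2 h3.
by rewrite (leq_trans h1 hB) (leq_trans h2 hB) (leq_trans h3 hB).
Qed.

Lemma awake_mono k s t : (s <= t)%N -> awk k s -> awk k t.
Proof. by move=> h /andP[h1 h2]; rewrite /awk h2 (leq_trans h1 h). Qed.


Lemma iotaS0 B : iota 0 B.+1 = iota 0 B ++ [:: B].
Proof. by rewrite -addn1 iotaD. Qed.

Lemma aw_sum B : \sum_(j <- iota 0 B) aw j = 1 - (B.+1%:R)^-1.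
Proof.
elim: B => [|B IH]; first by rewrite big_nil invr1 subrr.
rewrite iotaS0 big_cat big_seq1 IH /aw.
have hb : (0 : R) <= B%:R by rewrite ler0n.
have e1 : (B.+1%:R : R) = B%:R + 1 by rewrite -natr1.
have e2 : (B.+2%:R : R) = B%:R + 2 by rewrite -natr1 e1; ring.
rewrite natrM e2 e1.
have h1 : (B%:R + 1 : R) != 0 by rewrite lt0r_neq0 //; lra.
have h2 : (B%:R + 2 : R) != 0 by rewrite lt0r_neq0 //; lra.
rewrite /=; field; by rewrite h1 h2.
Qed.

Lemma ind_sum (n B : nat) :
  \sum_(i <- iota 0 B) (if (i < n)%N then (n%:R : R)^-1 else 0) <= (minn B n)%:R * (n%:R)^-1.
Proof.
elim: B => [|B IH]; first by rewrite big_nil min0n mul0r.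
rewrite iotaS0 big_cat big_seq1 /=.
case: ltnP => h.
  rewrite (elimT minn_idPl (ltnW h)) in IH.
  rewrite (elimT minn_idPl h) -natr1 mulrDl mul1r.
  by rewrite lerD2r.
rewrite addr0; apply: le_trans IH _; apply: ler_wpM2r; first by rewrite invr_ge0.
by rewrite ler_nat leq_min geq_minr andbT (leq_trans (geq_minl B n) (leqnSn B)).
Qed.

Lemma ind_sum1 (n B : nat) :
  \sum_(i <- iota 0 B) (if (i < n)%N then (n%:R : R)^-1 else 0) <= 1.
Proof.
apply: le_trans (ind_sum n B) _.
case: n => [|n]; first by rewrite invr0 mulr0.
have hn : (0 : R) < n.+1%:R by rewrite ltr0n.
rewrite ler_pdivrMr // mul1r ler_nat; exact: geq_minr.
Qed.

Lemma pri_sum t : \sum_(k <- cand t) pri k <= 1.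
Proof.
rewrite /cand big_allpairs big_allpairs.
apply: (@le_trans _ _ (\sum_(j <- iota 0 (Bd t)) \sum_(m <- iota 0 (Bd t)) aw j * aw m)).
  apply: ler_sum => j _; apply: ler_sum => m _.
  rewrite /pri /= -mulr_sumr -{2}(mulr1 (aw j * aw m)).
  apply: ler_wpM2l; first by rewrite mulr_ge0 // ltW // aw_gt0.
  exact: ind_sum1.
under eq_bigr do rewrite -mulr_sumr aw_sum.
rewrite -mulr_suml aw_sum.
have h : forall B, 0 <= 1 - ((B.+1)%:R : R)^-1 <= 1.
  move=> B; have h0 : 0 <= ((B.+1)%:R : R)^-1 by rewrite invr_ge0.
  have h1 : ((B.+1)%:R : R)^-1 <= 1 by rewrite invf_le1 ?ltr0n // ler1n.
  move: h0 h1; set v := ((B.+1)%:R : R)^-1 => h0 h1.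
  apply/andP; split; lra.
have /andP[a1 a2] := h (Bd t).
have : (1 - ((Bd t).+1%:R : R)^-1) * (1 - ((Bd t).+1%:R)^-1) <= 1 * 1.
  by apply: ler_pM.
by rewrite mul1r.
Qed.

End Concrete.
Section Main.
Variables (R : realType) (X : topologicalType).
Variables (Fs : set (X -> R)) (nF : (X -> R) -> R).
Hypothesis hB : BanachFunctionSpace Fs nF.
Hypothesis hC : compactly_embedded Fs nF.
Hypothesis hD : densely_embedded Fs.

Let UU := U R X Fs nF.

Lemma dy_gt0 m : 0 < dy R m.
Proof. by rewrite /dy invr_gt0 exprn_gt0. Qed.

Lemma exnet d : 0 < d -> exists n, has_net UU d n.
Proof. by move=> d0; apply: compact_net => //; exact: hC. Qed.

Lemma nsz_spec m : has_net UU (dy R m) (nsz R X Fs nF m) /\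
  forall n, has_net UU (dy R m) n -> (nsz R X Fs nF m <= n)%N.
Proof.
rewrite /nsz; case: pselect => [h|h].
  case: (ex_minnP h) => n /asboolP hn hmin; split => // n' hn'.
  by apply: hmin; apply/asboolP.
exfalso; apply: h; have [n hn] := exnet (dy R m) (dy_gt0 m).
by exists n; apply/asboolP.
Qed.

Lemma net_spec m :
  [/\ size (net R X Fs nF m) = nsz R X Fs nF m,
      (forall f, f \in net R X Fs nF m -> UU f) &
      (forall g, UU g -> exists2 f, f \in net R X Fs nF m & supdist_le g f (dy R m))].
Proof.
rewrite /net; case: pselect => [h|h]; last by exfalso; apply: h; case: (nsz_spec m).
by case: (cid h) => s [hs1 [hs2 hs3]] /=; split.
Qed.

End Main.
Arguments lg {R}.
Arguments clip {R}.
Arguments lg_mono {R}.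
Arguments lgM {R}.
Arguments lgX {R}.
Arguments lg_ge0 {R}.
Arguments ln_le_lg {R}.
Arguments exists_pow2 {R}.
Arguments dy {R}.

Section Final.
Variables (R : realType) (X : topologicalType).
Variables (Fs : set (X -> R)) (nF : (X -> R) -> R).
Hypothesis hB : BanachFunctionSpace Fs nF.
Hypothesis hC : compactly_embedded Fs nF.
Hypothesis hD : densely_embedded Fs.

Lemma lg_bound (z c : R) : 0 < z -> 0 < c -> z <= 4 * c -> lg z <= 2 + lg c.
Proof.
move=> z0 c0 hz; apply: le_trans (lg_mono _ _ z0 hz) _.
by rewrite lgM // ?lg4 //; lra.
Qed.

Lemma lg_nat_le (x : nat) : ((lg2n x)%:R : R) <= lg (x.+1%:R).
Proof.
have := trunc_log_bounds (ltnSn 1) (ltn0Sn x); rewrite -/(lg2n x) => /andP[h1 _].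
rewrite -(lgX (lg2n x)); apply: lg_mono; first by rewrite exprn_gt0.
by rewrite -natrX ler_nat.
Qed.

Lemma has_net_mono (A : set (X -> R)) (d d' : R) (n : nat) :
  d <= d' -> has_net A d n -> has_net A d' n.
Proof.
move=> hd [s [hs1 [hs2 hs3]]]; exists s; split => //; split => // g Ag.
have [f fs hf] := hs3 g Ag; exists f => // z; exact: le_trans (hf z) hd.
Qed.

Lemma main_bound (F : X -> R) (eps : R) (x : nat -> X) (y : nat -> R) (N : nat) :
  CX F -> 0 < eps -> eps <= 1/2 -> (forall n, -1 <= y n <= 1) ->
  Mloss R X Ity cand (awk R X Fs nF) (pri R X Fs nF) (pexp R X Fs nF) x y N
  <= \sum_(n < N) (y n - F (x n)) ^+ 2 +
     2000 * (let A := 2 * Num.max 1 (approachability Fs nF eps F) in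
             entropy (unit_ball Fs nF) (eps / A) + log2 (log2 (1 / eps))
             + log2 (log2 A) + eps * N%:R + 1).
Proof.
move=> hF e0 e1 hy.
have y1 : forall s, `|y s| <= 1 by move=> s; rewrite ler_norml; exact: hy.
set ap := approachability Fs nF eps F.
set A := 2 * Num.max 1 ap.
have hmx1 : 1 <= Num.max 1 ap by rewrite le_max lexx.
have hmx2 : ap <= Num.max 1 ap by rewrite le_max lexx orbT.
have A2 : 2 <= A by rewrite /A; lra.
have Aap : ap + 1 <= A by rewrite /A; lra.
have A0 : 0 < A by lra.
set S' := [set nF g | g in [set g | Fs g /\ supdist_le F g eps]].
have S'ne : S' !=set0.
  have [g Fg dg] := hD F hF eps e0.
  by exists (nF g), g.
have hinf : inf S' < ap + 1 by rewrite /ap /approachability -/S'; lra.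
have [v [g [Fg dg] <-] vlt] := inf_lt S'ne hinf.
have A1 : 1 <= A by lra.
have [mA /andP[hA1 hA2]] := exists_pow2 A A1.
set j := mA.+1.
have h2j : 2 ^+ j <= 2 * A :> R by rewrite /j exprS; lra.
have hAj : A <= 2 ^+ j :> R by apply: ltW.
have hAe : 1 <= A / eps.
  by rewrite ler_pdivlMr // mul1r; lra.
have [m /andP[hm1 hm2]] := exists_pow2 (A / eps) hAe.
have j0 : (0 : R) < 2 ^+ j by rewrite exprn_gt0.
set gs := fun z => (2 ^+ j)^-1 * g z.
have Ugs : U R X Fs nF gs.
  split; first exact: (bfs_scale hB).
  rewrite /gs (bfs_normZ hB) // ger0_norm ?invr_ge0 ?ltW //.
  rewrite mulrC ltr_pdivrMr // mul1r; lra.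
have [hsz _ hcov] := @net_spec R X Fs nF hC m.
have [f fin hgf] := hcov gs Ugs.
set i := index f (net R X Fs nF m).
have hi : (i < nsz R X Fs nF m)%N by rewrite -hsz index_mem.
have hnth : nth (fun _ => 0) (net R X Fs nF m) i = f by apply: nth_index.
set k : Ity := ((j, m), i).
have hjm : 2 ^+ j * dy m <= 4 * eps.
  have m0 : (0:R) < 2 ^+ m by rewrite exprn_gt0.
  rewrite /dy ler_pdivrMr // .
  move: hm2; rewrite exprS ltr_pdivrMr // => hm2.
  lra.
have happ : forall z, `|2 ^+ j * f z - F z| <= 5 * eps.
  move=> z.
  have d1 : `|g z - F z| <= eps by rewrite distrC; exact: dg.
  have d2 : `|2 ^+ j * f z - g z| <= 2 ^+ j * dy m.
    have -> : 2 ^+ j * f z - g z = 2 ^+ j * (f z - gs z).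
      by rewrite /gs mulrBr mulrA divff ?mul1r // lt0r_neq0.
    rewrite normrM (ger0_norm (ltW j0)) ler_pM2l // distrC; exact: hgf.
  have := ler_normD (2 ^+ j * f z - g z) (g z - F z).
  rewrite (_ : 2 ^+ j * f z - g z + (g z - F z) = 2 ^+ j * f z - F z); last by ring.
  lra.
have hloss : \sum_(s < N) (y s - pexp R X Fs nF k (x s))^+2
    <= \sum_(s < N) (y s - F (x s))^+2 + 20 * eps * N%:R.
  apply: (@le_trans _ _ (\sum_(s < N) ((y s - F (x s))^+2 + 20 * eps))).
    apply: ler_sum => s _.
    rewrite /pexp /= hnth.
    have := clip_loss R (y s) (2 ^+ j * f (x s)) (F (x s)) (y1 s).
    have := happ (x s); lra.
  by rewrite big_split /= sumr_const card_ord mulr_natr.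
set n := nsz R X Fs nF m.
have hpri : pri R X Fs nF k = aw R j * aw R m * (n%:R)^-1 by rewrite /pri /= hi.
have n0 : (0 < n)%N by apply: leq_ltn_trans _ hi.
have pa : 0 < ((j.+1 * j.+2)%:R : R) by rewrite ltr0n muln_gt0.
have pb : 0 < ((m.+1 * m.+2)%:R : R) by rewrite ltr0n muln_gt0.
have pc : 0 < (n%:R : R) by rewrite ltr0n.
have hprip : 0 < pri R X Fs nF k.
  by rewrite hpri /aw !mulr_gt0 // invr_gt0.
have haw : awk R X Fs nF k (tau R X Fs nF m j) by rewrite /awk /= leqnn hi.
have hEB := @expert_bound R X Ity cand (awk R X Fs nF) (pri R X Fs nF) (pexp R X Fs nF) x y (pri_ge0 R X Fs nF) (pexp1 R X Fs nF) y1 cand_uniq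
  (cand_awake R X Fs nF) cand_mono (awake_mono R X Fs nF) (pri_sum R X Fs nF)
  k (tau R X Fs nF m j) N haw hprip.
have hlnp : - ln (pri R X Fs nF k) =
    ln ((j.+1 * j.+2)%:R : R) + ln ((m.+1 * m.+2)%:R : R) + ln (n%:R : R).
  rewrite hpri /aw lnM ?posrE ?mulr_gt0 ?invr_gt0 //.
  rewrite lnM ?posrE ?invr_gt0 // !lnV ?posrE //.
  by ring.
set a := lg A.
set b := lg (1 / eps).
have Fa : 1 <= a by rewrite /a -(lg2 R); apply: lg_mono => //; lra.
have ie : 2 <= 1 / eps by rewrite ler_pdivlMr //; lra.
have Fb : 1 <= b by rewrite /b -{1}(lg2 R); apply: lg_mono => //; lra.
have FmA : (mA%:R : R) <= a.
  by rewrite /a -(lgX mA); apply: lg_mono => //; rewrite exprn_gt0.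
have Fm : (m%:R : R) <= a + b.
  rewrite /a /b -lgM //; last lra.
  rewrite -(lgX m); apply: lg_mono; first by rewrite exprn_gt0.
  by rewrite mul1r.
have hdy : eps / A <= dy m.
  have m0 : (0:R) < 2 ^+ m by rewrite exprn_gt0.
  rewrite /dy -[eps / A]invf_div lef_pV2 ?posrE ?divr_gt0 //.
set H := entropy (unit_ball Fs nF) (eps / A).
have FH : lg (n%:R : R) <= H.
  rewrite /H /entropy; apply: lg_mono => //.
  apply: lb_le_inf.
    have [k0 hk0] := @exnet R X Fs nF hC (eps / A) (divr_gt0 e0 A0).
    by exists k0%:R, k0.
  move=> _ [k0 hk0 <-]; rewrite ler_nat.
  have [_ hmin] := @nsz_spec R X Fs nF hC m.
  apply: hmin; exact: has_net_mono hdy hk0.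
have Ftau : ((tau R X Fs nF m j)%:R : R) <=
    lg (j.+1%:R) + lg (m.+1%:R) + lg (n.+1%:R).
  rewrite /tau !natrD.
  have := lg_nat_le j; have := lg_nat_le m; have := lg_nat_le n; lra.
have la0 : 0 <= lg a by apply: lg_ge0.
have lb0 : 0 <= lg b by apply: lg_ge0.
have ln0 : 0 <= lg (n%:R : R) by apply: lg_ge0; rewrite ler1n.
have eab : lg (a * b) = lg a + lg b by rewrite lgM //; lra.
have Bj1 : lg (j.+1%:R : R) <= 2 + lg a.
  apply: lg_bound; [by rewrite ltr0n | lra | ].
  by rewrite /j -!natr1; lra.
have Bj2 : lg (j.+2%:R : R) <= 2 + lg a.
  apply: lg_bound; [by rewrite ltr0n | lra | ].
  by rewrite /j -!natr1; lra.
have Bm1 : lg (m.+1%:R : R) <= 2 + lg a + lg b.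
  rewrite -addrA -eab; apply: lg_bound; [by rewrite ltr0n | nra | ].
  rewrite -!natr1; nra.
have Bm2 : lg (m.+2%:R : R) <= 2 + lg a + lg b.
  rewrite -addrA -eab; apply: lg_bound; [by rewrite ltr0n | nra | ].
  rewrite -!natr1; nra.
have Bn : lg (n.+1%:R : R) <= 1 + lg (n%:R : R).
  rewrite (_ : 1 + lg (n%:R : R) = lg (2 * n%:R)); last by rewrite lgM ?lg2.
  apply: lg_mono; first by rewrite ltr0n.
  rewrite -natr1; have : (1 : R) <= n%:R by rewrite ler1n.
  lra.
have L1 : ln ((j.+1 * j.+2)%:R : R) <= lg (j.+1%:R) + lg (j.+2%:R).
  rewrite -lgM ?ltr0n // -natrM; apply: ln_le_lg; rewrite ler1n muln_gt0 //.
have L2 : ln ((m.+1 * m.+2)%:R : R) <= lg (m.+1%:R) + lg (m.+2%:R).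
  rewrite -lgM ?ltr0n // -natrM; apply: ln_le_lg; rewrite ler1n muln_gt0 //.
have L3 : ln (n%:R : R) <= lg (n%:R) by apply: ln_le_lg; rewrite ler1n.
have eN : 0 <= eps * N%:R by rewrite mulr_ge0 // ltW.
have el : forall z : R, log2 z = lg z by [].
cbv zeta; rewrite !el -/a -/b -/H.
move: hEB hloss hlnp; rewrite -/a -/b.
set Ml := Mloss _ _ _ _ _ _ _ _ _ _.
set Se := \sum_(s < N) _.
set SF := \sum_(s < N) _.
set tt := ((tau R X Fs nF m j)%:R : R).
set lp := ln (pri R X Fs nF k).
move=> hEB hloss hlnp.
lra.
Qed.

End Final.
Lemma inf_bound2000 (R : realType) (M SF : R) (E : set R) : E !=set0 ->
  (forall v, E v -> M <= SF + 2000 * v) -> M <= SF + 2000 * inf E.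
Proof.
move=> ne hv.
have h0 : (0:R) < 2000 by lra.
have h : (M - SF) / 2000 <= inf E.
  apply: lb_le_inf; first exact: ne.
  move=> v Ev; have := hv v Ev.
  rewrite (ler_pdivrMr _ _ h0).
  lra.
have h2 : 2000 * ((M - SF) / 2000) <= 2000 * inf E by apply: ler_wpM2l; [exact: ltW | exact: h].
have e : 2000 * ((M - SF) / 2000) = M - SF.
  by rewrite mulrC -mulrA (mulVf (lt0r_neq0 h0)) mulr1.
move: h2; rewrite e; set t := inf E; lra.
Qed.
Theorem theorem4 :
  exists C : Rdefinitions.R, 0 < C /\
  forall (X : topologicalType), inhabited X ->
  forall (Fs : set (X -> Rdefinitions.R)) (nF : (X -> Rdefinitions.R) -> Rdefinitions.R),
    BanachFunctionSpace Fs nF ->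
    compactly_embedded Fs nF ->
    densely_embedded Fs ->
    exists S : strategy Rdefinitions.R X,
      (forall h x, `|S h x| <= 1) /\
      forall (N : nat) (F : X -> Rdefinitions.R), CX F ->
      forall (x : nat -> X) (y : nat -> Rdefinitions.R), (forall n, -1 <= y n <= 1) ->
        \sum_(n < N) (y n - S (history x y n) (x n)) ^+ 2
        <= \sum_(n < N) (y n - F (x n)) ^+ 2
           + C * inf [set (let A := 2 * Num.max 1 (approachability Fs nF e F) in
                          entropy (unit_ball Fs nF) (e / A)
                          + log2 (log2 (1 / e)) + log2 (log2 A)
                          + e * N%:R + 1)
                     | e in `]0, 1/2]].
Proof.
exists 2000; split; first by lra.
move=> X _ Fs nF hB hC hD.
pose R := Rdefinitions.R.
exists (mkstrat R X Ity cand (awk R X Fs nF) (pri R X Fs nF) (pexp R X Fs nF)); split.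
  move=> h z; rewrite /mkstrat.
  exact: (@mu_le1 R X Ity cand (awk R X Fs nF) (pri R X Fs nF) (pexp R X Fs nF) _ _ (pri_ge0 R X Fs nF) (pexp1 R X Fs nF)).
move=> N F hF x y hy.
have -> : \sum_(n < N) (y n - mkstrat R X Ity cand (awk R X Fs nF) (pri R X Fs nF)
     (pexp R X Fs nF) (history x y n) (x n)) ^+ 2 =
   Mloss R X Ity cand (awk R X Fs nF) (pri R X Fs nF) (pexp R X Fs nF) x y N.
  by apply: eq_bigr => n _; rewrite /history mkstrat_hist.
set M := Mloss _ _ _ _ _ _ _ _ _ _.
set SF := \sum_(n < N) _.
set T := inf _.
apply: inf_bound2000.
  exists (let A := 2 * Num.max 1 (approachability Fs nF (1/2) F) in
            entropy (unit_ball Fs nF) ((1/2) / A)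
            + log2 (log2 (1 / (1/2))) + log2 (log2 A) + (1/2) * N%:R + 1).
  exists (1/2); last by [].
  by rewrite /= in_itv /=; apply/andP; split; lra.
move=> _ [e he <-].
move: he; rewrite /= in_itv /= => /andP[e0 e1].
exact: (@main_bound R X Fs nF hB hC hD F e x y N hF e0 e1 hy).
Qed.
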